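(* Let $k\in\mathbb{N}$ and let $F\colon S_{\ell_\infty^k}\to S^+_{\ell_1^k}$ be any map. Then the map $G\colon S_{\ell_\infty^k}\to S^+_{\ell_1^k}$ given by \[G=\frac1{k!}\sum_{\pi\in\mathrm{Per}_k}P_{\pi^{-1}}\circ F\circ P_\pi\] is well defined, equivariant with respect to basis permutations, and satisfies $\omega_G\le\omega_F$. Furthermore, if $F$ is support preserving, then so is $G$.
   Context: $S_{\ell_\infty^k}$ is the unit sphere of $(\mathbb{R}^k,\|\cdot\|_\infty)$; $S^+_{\ell_1^k}=\{x\in\mathbb{R}^k:\|x\|_1=1, x_i\ge0\ \forall i\}$. $\mathrm{Per}_k$ is the group of permutations of $\{1,\dots,k\}$; $P_\pi(x_j)_{j=1}^k=(x_{\pi(j)})_{j=1}^k$. Equivariant with respect to basis permutations: $G(P_\pi x)=P_\pi G(x)$ for all $x,\pi$. $\omega_F(t)=\sup\{\|F(x)-F(y)\|_1:\|x-y\|_\infty\le t\}$. Support preserving: $\mathrm{supp}(F(x))=\mathrm{supp}(x)$ for all $x$, where $\mathrm{supp}(x)=\{i:x_i\neq0\}$. *)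

(* Defs.v *)
From HB Require Import structures.
From mathcomp Require Import all_boot all_order all_algebra all_fingroup.
From mathcomp Require Import all_classical all_reals.
From mathcomp Require Import constructive_ereal ereal.
Set Implicit Arguments. Unset Strict Implicit. Unset Printing Implicit Defensive.
Import Order.TTheory GRing.Theory Num.Theory.
Local Open Scope ring_scope.
Local Open Scope classical_set_scope.

Definition normInf (R : realType) (k : nat) (x : 'I_k -> R) : R :=
  \big[Num.max/0]_(i < k) `|x i|.
Definition norm1 (R : realType) (k : nat) (x : 'I_k -> R) : R :=
  \sum_(i < k) `|x i|.

Definition SInf (R : realType) (k : nat) : set ('I_k -> R) :=
  [set x | normInf x = 1].
Definition S1plus (R : realType) (k : nat) : set ('I_k -> R) :=
  [set x | norm1 x = 1 /\ forall i, 0 <= x i].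

Definition Pperm (R : realType) (k : nat) (pi : 'S_k) (x : 'I_k -> R) : 'I_k -> R :=
  fun j => x (pi j).

Definition symmetrize (R : realType) (k : nat) (F : ('I_k -> R) -> ('I_k -> R))
    (x : 'I_k -> R) : 'I_k -> R :=
  fun j => (k`!%:R)^-1 * \sum_(pi : 'S_k) Pperm (pi^-1)%g (F (Pperm pi x)) j.

Definition omega (R : realType) (k : nat) (F : ('I_k -> R) -> ('I_k -> R)) (t : R)
  : \bar R :=
  ereal_sup [set e : \bar R | exists x y, [/\ @SInf R k x, @SInf R k y,
     normInf (fun i => x i - y i) <= t &
     e = (norm1 (fun i => F x i - F y i))%:E] ].

Definition supp (R : realType) (k : nat) (x : 'I_k -> R) : {set 'I_k} :=
  [set i | x i != 0].

(* Main.v *)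
Require Import Defs.
From HB Require Import structures.
From mathcomp Require Import all_boot all_order all_algebra all_fingroup.
From mathcomp Require Import all_classical all_reals.
From mathcomp Require Import constructive_ereal ereal.
Import Order.TTheory GRing.Theory Num.Theory.
Local Open Scope ring_scope.
Local Open Scope classical_set_scope.

Section Helpers.
Variable R : realType.
Variable k : nat.

Lemma normInf_perm (pi : 'S_k) (x : 'I_k -> R) : normInf (Pperm pi x) = normInf x.
Proof.
rewrite /normInf /Pperm [RHS](reindex_inj (@perm_inj _ pi)) //.
Qed.

Lemma sum_perm (pi : 'S_k) (f : 'I_k -> R) : \sum_(j < k) f (pi j) = \sum_(j < k) f j.
Proof. by rewrite [RHS](reindex_inj (@perm_inj _ pi)). Qed.

Lemma SInf_perm (pi : 'S_k) (x : 'I_k -> R) : SInf x -> SInf (Pperm pi x).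
Proof. by rewrite /SInf /= normInf_perm. Qed.

Lemma fact_gt0R : (0 : R) < k`!%:R.
Proof. by rewrite ltr0n fact_gt0. Qed.

Lemma sum_const_perm (c : R) : \sum_(pi : 'S_k) c = c * k`!%:R.
Proof. by rewrite sumr_const card_Sn mulr_natr. Qed.

End Helpers.
Arguments normInf_perm {R k}.
Arguments sum_perm {R k}.
Arguments SInf_perm {R k pi x}.
Arguments sum_const_perm {R k}.

Theorem lemma4p3 (R : realType) (k : nat) (F : ('I_k -> R) -> ('I_k -> R))
  (HF : forall x, @SInf R k x -> @S1plus R k (F x)) :
  let G := symmetrize F in
  [/\ (forall x, @SInf R k x -> @S1plus R k (G x)),
      (forall (pi : 'S_k) x, @SInf R k x -> G (Pperm pi x) = Pperm pi (G x)),
      (forall t : R, (omega G t <= omega F t)%E) &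
      ((forall x, @SInf R k x -> supp (F x) = supp x) ->
        forall x, @SInf R k x -> supp (G x) = supp x)].
Proof.
move=> G.
have kpos := @fact_gt0R R k.
have Gge0 : forall x, SInf x -> forall j, 0 <= G x j.
  move=> x Sx j; rewrite /G /symmetrize; apply: mulr_ge0; first by rewrite invr_ge0 ltW.
  apply: sumr_ge0 => pi _; rewrite /Pperm.
  by case: (HF _ (@SInf_perm _ _ pi _ Sx)) => _ ->.
split.
- move=> x Sx; split; last exact: Gge0.
  rewrite /Defs.norm1.
  under eq_bigr => j _ do rewrite ger0_norm ?Gge0 //.
  rewrite /G /symmetrize -mulr_sumr exchange_big /=.
  have H1 : forall pi : 'S_k, \sum_(j < k) Pperm (pi^-1)%g (F (Pperm pi x)) j = 1.
    move=> pi; rewrite /Pperm (sum_perm (pi^-1)%g (F (fun j => x (pi j)))).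
    have [<- H0] := HF _ (@SInf_perm _ _ pi _ Sx).
    by apply: eq_bigr => j _; rewrite ger0_norm ?H0.
  under eq_bigr => pi _ do rewrite H1.
  by rewrite sum_const_perm mul1r mulVf // gt_eqF.
- move=> s x _; apply/funext => j.
  rewrite /G /symmetrize /Pperm; congr (_ * _).
  rewrite (reindex_inj (mulIg s^-1)%g) /=.
  apply: eq_bigr => pi _.
  have -> : (fun j0 => x (s ((pi * s^-1)%g j0))) = (fun j0 => x (pi j0)).
    by apply/funext => i; rewrite permM permKV.
  by rewrite invMg invgK permM.
- move=> t; apply: ge_ereal_sup => _ [x [y [Sx Sy Hxy ->]]].
  have Hb : forall pi : 'S_k,
      ((Defs.norm1 (fun i => F (Pperm pi x) i - F (Pperm pi y) i))%:E <= omega F t)%E.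
    move=> pi; apply: ereal_sup_ubound; exists (Pperm pi x), (Pperm pi y); split => //.
    + exact: SInf_perm.
    + exact: SInf_perm.
    + by rewrite (_ : (fun i => _) = Pperm pi (fun i => x i - y i)) // normInf_perm.
  move: (omega F t) Hb => M Hb.
  case: M Hb => [r| |] Hb; last 2 first.
  + exact: leey.
  + by have := Hb 1%g; rewrite leeNy_eq.
  rewrite lee_fin.
  have cge0 : 0 <= (k`!%:R : R)^-1 by rewrite invr_ge0 ltW.
  apply: (le_trans (y := (k`!%:R)^-1 * \sum_(pi : 'S_k) \sum_(j < k)
     `|Pperm (pi^-1)%g (F (Pperm pi x)) j - Pperm (pi^-1)%g (F (Pperm pi y)) j|)).
    rewrite /Defs.norm1 /G /symmetrize exchange_big mulr_sumr; apply: ler_sum => j _.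
    rewrite -mulrBr -sumrB normrM (ger0_norm cge0); apply: ler_wpM2l => //.
    exact: ler_norm_sum.
  apply: (le_trans (y := (k`!%:R)^-1 * \sum_(pi : 'S_k) r)); last first.
    by rewrite sum_const_perm mulrCA mulVf ?mulr1 // gt_eqF.
  apply: ler_wpM2l => //; apply: ler_sum => pi _.
  have := Hb pi; rewrite lee_fin; apply: le_trans; rewrite le_eqVlt; apply/orP; left; apply/eqP.
  rewrite /Pperm /Defs.norm1.
  exact: (sum_perm (pi^-1)%g (fun i => `|F (fun j => x (pi j)) i - F (fun j => y (pi j)) i|)).
- move=> Hs x Sx; apply/setP => j; rewrite !inE.
  have Ht : forall pi : 'S_k, (Pperm (pi^-1)%g (F (Pperm pi x)) j == 0) = (x j == 0).
    move=> pi; have := Hs _ (@SInf_perm _ _ pi _ Sx); move/setP/(_ ((pi^-1)%g j)).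
    rewrite /= !inE /Pperm permKV => H.
    by apply/idP/idP; apply: contraLR; rewrite H.
  rewrite /G /symmetrize mulf_eq0 negb_or invr_eq0 gt_eqF //=.
  rewrite psumr_eq0; last first.
    by move=> pi _; rewrite /Pperm; case: (HF _ (@SInf_perm _ _ pi _ Sx)) => _ ->.
  rewrite (eq_all (a2 := fun _ => x j == 0)); last by move=> pi /=; rewrite Ht.
  case: (x j == 0) => /=.
    by apply/allP.
  by apply/negP => /allP /(_ 1%g (mem_index_enum _)).
Qed.
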